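(* For every $R>0$ there exists $\eta>0$ such that for every $\delta\in\mathcal{V}_R$ satisfying $\sup\{|\delta(x)|: x\in\mathcal{K}_1\}<\eta$, the point $0$ is the unique equilibrium point of the vector field $F_{\lambda+\delta}$ lying in $\mathcal{K}_1$.
   Context: Let $n\ge1$, $A,B\in\mathrm{End}(\mathbb{R}^n)$, $b\in\mathbb{R}^n$, $A_u=A+uB$. For $\mu:\mathbb{R}^n\to\mathbb{R}$, $F_\mu$ is the vector field $F_\mu(x)=A_{\mu(x)}x+b\mu(x)$ on $\mathbb{R}^n$. Let $\lambda\in C^\infty(\mathbb{R}^n,\mathbb{R})$ with $\lambda(0)=0$ be such that $0$ is an asymptotically stable equilibrium of $F_\lambda$ with open domain of attraction $D(\lambda)$. Let $\mathcal{K}_1$ be a (semi-algebraic) compact subset of $D(\lambda)$. For $R>0$, $\mathcal{V}_R=\{\delta\in C^\infty(\mathbb{R}^n,\mathbb{R}):\delta(x)=0\ \forall x\in B(0,R)\}$. *)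

(* Defs.v *)
From HB Require Import structures.
From mathcomp Require Import all_boot all_order all_algebra.
From mathcomp Require Import all_classical all_reals all_analysis.
Set Implicit Arguments. Unset Strict Implicit. Unset Printing Implicit Defensive.
Import Order.TTheory GRing.Theory Num.Theory.
Import numFieldNormedType.Exports.
Local Open Scope classical_set_scope.
Local Open Scope ring_scope.

Section Defs.
Variables (R : realType) (n : nat).
Notation V := 'cV[R]_n.

Definition enorm (x : V) : R := Num.sqrt (\sum_(i < n) x i 0 ^+ 2).

Fixpoint Ck (k : nat) (f : V -> R) : Prop :=
  match k with
  | 0%N => continuous f
  | k'.+1 => continuous f /\
             forall v : V, (forall x, derivable f x v) /\ Ck k' (fun x => 'D_v f x)
  end.
Definition smooth (f : V -> R) : Prop := forall k, Ck k f.

Definition Au (A B : 'M[R]_n) (u : R) : 'M[R]_n := A + u *: B.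
Definition Fmu (A B : 'M[R]_n) (b : V) (mu : V -> R) (x : V) : V :=
  Au A B (mu x) *m x + mu x *: b.

Definition fwd_solution (F : V -> V) (x0 : V) (phi : R -> V) : Prop :=
  phi 0 = x0 /\
  (phi t @[t --> 0^'+] --> x0) /\
  (forall t : R, 0 < t -> is_derive t 1 phi (F (phi t))).

Definition domain_of_attraction (F : V -> V) : set V :=
  [set x0 | exists phi, fwd_solution F x0 phi /\ (phi t @[t --> +oo] --> (0 : V))].

Definition asympt_stable_0 (F : V -> V) : Prop :=
  F 0 = 0 /\
  (forall eps : R, 0 < eps -> exists2 d : R, 0 < d &
     forall x0, enorm x0 < d ->
       exists phi, fwd_solution F x0 phi /\ forall t, 0 <= t -> enorm (phi t) < eps) /\
  (exists2 r : R, 0 < r & [set x | enorm x < r] `<=` domain_of_attraction F).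

Inductive polyfun : (V -> R) -> Prop :=
  | pf_const (c : R) : polyfun (fun _ => c)
  | pf_coord (i : 'I_n) : polyfun (fun x => x i 0)
  | pf_add p q : polyfun p -> polyfun q -> polyfun (fun x => p x + q x)
  | pf_mul p q : polyfun p -> polyfun q -> polyfun (fun x => p x * q x).

Inductive semialgebraic : set V -> Prop :=
  | sa_pos p : polyfun p -> semialgebraic [set x | 0 < p x]
  | sa_union S T : semialgebraic S -> semialgebraic T -> semialgebraic (S `|` T)
  | sa_inter S T : semialgebraic S -> semialgebraic T -> semialgebraic (S `&` T)
  | sa_compl S : semialgebraic S -> semialgebraic (~` S).

Definition VR (Rad : R) : set (V -> R) :=
  [set delta | smooth delta /\ forall x, enorm x < Rad -> delta x = 0].

End Defs.

(* Main.v *)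
Require Import Defs.
From HB Require Import structures.
From mathcomp Require Import all_boot all_order all_algebra.
From mathcomp Require Import all_classical all_reals all_analysis.
From mathcomp Require Import ring lra.
Import Order.TTheory GRing.Theory Num.Theory.
Import numFieldNormedType.Exports.
Local Open Scope classical_set_scope.
Local Open Scope ring_scope.
Set Warnings "-all".
Set Implicit Arguments. Unset Strict Implicit.
Section Aux.
Variable R : realType.

Lemma cont_sum (T : topologicalType) k (f : 'I_k -> T -> R) x :
  (forall i, {for x, continuous (f i)}) ->
  {for x, continuous (fun y => \sum_(i < k) f i y)}.
Proof.
elim: k f => [|k IH] f H.
  have -> : (fun y => \sum_(i < 0) f i y) = (fun _ => 0).
    by apply: funext => y; rewrite big_ord0.
  exact: cvg_cst.
have -> : (fun y => \sum_(i < k.+1) f i y) =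
   (fun y => \sum_(i < k) f (widen_ord (leqnSn k) i) y + f ord_max y).
  by apply: funext => y; rewrite big_ord_recr.
apply: continuousD; last exact: H.
by apply: (IH (fun i => f (widen_ord (leqnSn k) i))) => i; exact: H.
Qed.

Lemma mx_cont (T : topologicalType) m k (f : T -> 'M[R]_(m,k)) x :
  (forall i j, {for x, continuous (fun y => f y i j)}) -> {for x, continuous f}.
Proof.
move=> H; apply/cvgrPdist_le => /= e e0.
near=> y.
rewrite [leLHS]/Num.Def.normr/= mx_normrE (bigmax_le _ (ltW e0))//= => ij _.
rewrite !mxE/=.
move: ij; near: y; apply: filter_forall => /= ij.
exact: ((cvgrPdist_le _ _).1 (H ij.1 ij.2)).
Unshelve. all: by end_near. Qed.

Lemma mulmx_cont (T : topologicalType) m k p (f : T -> 'M[R]_(m,k))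
  (g : T -> 'M[R]_(k,p)) x :
  {for x, continuous f} -> {for x, continuous g} ->
  {for x, continuous (fun y => f y *m g y)}.
Proof.
move=> Hf Hg; apply: mx_cont => i j.
have -> : (fun y => (f y *m g y) i j) = (fun y => \sum_(l < k) f y i l * g y l j).
  by apply: funext => y; rewrite mxE.
apply: cont_sum => l; apply: continuousM.
  exact: (continuous_comp (g := fun M : 'M[R]_(m,k) => M i l) Hf (@coord_continuous R _ _ i l _)).
exact: (continuous_comp (g := fun M : 'M[R]_(k,p) => M l j) Hg (@coord_continuous R _ _ l j _)).
Qed.

End Aux.
Section A.
Variables (R : realType) (n : nat).
Local Notation V := 'cV[R]_n.

Lemma ray_derive (f : V -> R) (p e : V) (s : R) :
  derivable f (p + s *: e) e ->
  is_derive s 1 (fun t => f (p + t *: e)) ('D_e f (p + s *: e)).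
Proof.
move=> H.
have E : (fun h : R => h^-1 *: (((fun t => f (p + t *: e)) \o shift s) (h *: 1)
            - f (p + s *: e))) =
         (fun h : R => h^-1 *: ((f \o shift (p + s *: e)) (h *: e) - f (p + s *: e))).
  apply: funext => h /=; congr (_ *: (f _ - _)).
  by rewrite scaler1 scalerDl addrCA addrC.
apply: DeriveDef.
  by rewrite /derivable E.
by rewrite /derive E.
Qed.
End A.
Section B.
Variable R : realType.

Lemma der_cont_at (g : R -> R) s : derivable g s 1 -> {for s, continuous g}.
Proof. by move=> H; apply/differentiable_continuous/derivable1_diffP. Qed.

Lemma mvt_bound (g dg : R -> R) (C d : R) :
  (forall s : R, is_derive s 1 g (dg s)) ->
  (forall s : R, `|s| <= `|d| -> `|dg s| <= C) -> `|g d - g 0| <= C * `|d|.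
Proof.
move=> Hd HC.
have gc : forall a b : R, {within `[a, b], continuous g}.
  by move=> a b; apply: continuous_subspaceT => s; apply: der_cont_at; exact: ex_derive.
case: (ltgtP d 0) => [dlt|dgt|->].
- have [c cin E] := @MVT R g dg d 0 dlt (fun s _ => Hd s) (gc _ _).
  rewrite distrC E normrM.
  rewrite sub0r normrN; apply: ler_wpM2r => //; apply: HC.
  move: cin; rewrite in_itv /= => /andP[c1 c2].
  by rewrite ltr0_norm // ltr0_norm ?(lt_trans c1) // lerN2 ltW.
- have [c cin E] := @MVT R g dg 0 d dgt (fun s _ => Hd s) (gc _ _).
  rewrite E normrM.
  rewrite subr0; apply: ler_wpM2r => //; apply: HC.
  move: cin; rewrite in_itv /= => /andP[c1 c2].
  by rewrite gtr0_norm // gtr0_norm ?(lt_trans c1) // ltW.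
- by rewrite subrr !normr0 mulr0.
Qed.
End B.
Section C.
Variables (R : realType).

Lemma entry_le m k (x : 'M[R]_(m,k)) i j : `|x i j| <= `|x|.
Proof.
rewrite [leRHS]/Num.Def.normr /= mx_normrE.
exact: (le_bigmax _ (fun ij : 'I_m * 'I_k => `|x ij.1 ij.2|) (i, j)).
Qed.

Lemma norm_le_entries m k (x : 'M[R]_(m,k)) M :
  0 <= M -> (forall i j, `|x i j| <= M) -> `|x| <= M.
Proof.
move=> M0 H; rewrite [leLHS]/Num.Def.normr /= mx_normrE.
by apply: bigmax_le => // ij _; exact: H.
Qed.

Lemma near_ball (T : normedModType R) (x : T) (P : T -> Prop) :
  (\forall y \near x, P y) -> exists2 r, 0 < r & forall y, `|y - x| < r -> P y.
Proof.
move=> /nbhs_ballP [r r0 H]; exists r => // y yr; apply: H.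
by rewrite -ball_normE /= distrC.
Qed.
End C.
Section D.
Variables (R : realType) (n : nat).
Local Notation V := 'cV[R]_n.

Definition ev (k : 'I_n) : V := delta_mx k 0.
Definition pth (y x0 : V) (k : nat) : V :=
  \col_i (if (i < k)%N then y i 0 else x0 i 0).

Lemma pth0 y x0 : pth y x0 0 = x0.
Proof. by apply/matrixP => i j; rewrite !mxE ord1. Qed.

Lemma pthn y x0 : pth y x0 n = y.
Proof. by apply/matrixP => i j; rewrite !mxE ltn_ord ord1. Qed.

Lemma pthS y x0 (k : 'I_n) :
  pth y x0 k.+1 = pth y x0 k + (y k 0 - x0 k 0) *: ev k.
Proof.
apply/matrixP => i j; rewrite !mxE ord1 eqxx andbT /=.
rewrite ltnS leq_eqVlt val_eqE.
have [->|ik] := eqVneq i k.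
  by rewrite /= ltnn mulr1 addrC subrK.
by rewrite /= mulr0 addr0.
Qed.

Lemma pth_near (y x0 : V) (k : 'I_n) (s : R) :
  `|s| <= `|y k 0 - x0 k 0| ->
  `|pth y x0 k + s *: ev k - x0| <= `|y - x0|.
Proof.
move=> Hs; apply: norm_le_entries => // i j.
rewrite !mxE ord1 eqxx andbT.
case: (eqVneq i k) => [->|ik] /=.
  rewrite ltnn mulr1 addrC addKr; apply: (le_trans Hs).
  by have := entry_le (y - x0) k 0; rewrite !mxE.
rewrite mulr0 addr0; case: ifP => _; last by rewrite subrr normr0.
by have := entry_le (y - x0) i 0; rewrite !mxE.
Qed.

Lemma lip_loc (f : V -> R) (x0 : V) : Ck 1 f ->
  exists2 rho, 0 < rho & exists K, forall y, `|y - x0| < rho ->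
    `|f y - f x0| <= K * `|y - x0|.
Proof.
move=> [fc Hd].
pose C (k : 'I_n) := `|'D_(ev k) f x0| + 1.
have : \forall z \near x0, forall k, `|'D_(ev k) f z| <= C k.
  apply: (@filter_forall V 'I_n (fun k z => `|'D_(ev k) f z| <= C k) (nbhs x0) _) => k.
  have [_ Dc] := Hd (ev k).
  have := (cvgrPdist_lt _ _).1 (Dc x0) 1 ltr01.
  move=> Hn; near=> z.
  have Hz : `|'D_(ev k) f x0 - 'D_(ev k) f z| < 1 by near: z; exact: Hn.
  rewrite /C -[X in `|X|](subrK ('D_(ev k) f x0)).
  rewrite (le_trans (ler_normD _ _)) // addrC lerD2l ltW //.
  by rewrite distrC.
move/near_ball => [rho rho0 Hrho].
exists rho => //; exists (\sum_k C k) => y yr.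
rewrite -{1}(pthn y x0) -{2}(pth0 y x0).
rewrite -(telescope_sumr (fun k => f (pth y x0 k))) // big_mkord.
rewrite mulr_suml (le_trans (ler_norm_sum _ _ _)) // ler_sum // => k _.
rewrite pthS.
apply: (@le_trans _ _ (C k * `|y k 0 - x0 k 0|)).
  have := @mvt_bound R (fun t => f (pth y x0 k + t *: ev k))
    (fun t => 'D_(ev k) f (pth y x0 k + t *: ev k)) (C k) (y k 0 - x0 k 0).
  rewrite /= scale0r addr0; apply.
  - by move=> s; apply: ray_derive; case: (Hd (ev k)) => + _; apply.
  - move=> s Hs; apply: Hrho.
    exact: (le_lt_trans (pth_near Hs) yr).
rewrite ler_wpM2l //; first by rewrite /C addr_ge0.
by have := entry_le (y - x0) k 0; rewrite !mxE.
Unshelve. all: by end_near. Qed.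
End D.
Section E.
Variables (R : realType) (n : nat).
Local Notation V := 'cV[R]_n.

Lemma mulmx_norm m k p (M : 'M[R]_(m,k)) (d : 'M[R]_(k,p)) :
  `|M *m d| <= k%:R * `|M| * `|d|.
Proof.
apply: norm_le_entries; first by rewrite !mulr_ge0.
move=> i j; rewrite mxE (le_trans (ler_norm_sum _ _ _)) //.
have -> : k%:R * `|M| * `|d| = \sum_(l < k) (`|M| * `|d|).
  by rewrite sumr_const card_ord -mulrA mulr_natl.
rewrite ler_sum // => l _.
by rewrite normrM ler_pM // entry_le.
Qed.

Lemma FmuE (A B : 'M[R]_n) b mu x :
  Fmu A B b mu x = A *m x + mu x *: (B *m x + b).
Proof. by rewrite /Fmu /Au mulmxDl -scalemxAl scalerDr addrA. Qed.

Lemma F_lip (A B : 'M[R]_n) (b : V) lam x0 : Ck 1 lam ->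
  Fmu A B b lam x0 = 0 ->
  exists2 rho, 0 < rho & exists2 L, 0 <= L & forall y, `|y - x0| < rho ->
    `|Fmu A B b lam y| <= L * `|y - x0|.
Proof.
move=> /(lip_loc x0) [rho rho0 [K HK]] F0.
have HK' y : `|y - x0| < rho -> `|lam y - lam x0| <= `|K| * `|y - x0|.
  move=> /HK H; apply: (le_trans H); apply: ler_wpM2r => //; exact: ler_norm.
pose w := B *m x0 + b.
exists rho => //.
exists (n%:R * `|A| + (`|lam x0| + `|K| * rho) * (n%:R * `|B|) + `|K| * `|w|).
  have r0 := ltW rho0.
  by rewrite !addr_ge0 ?mulr_ge0 ?addr_ge0 ?mulr_ge0.
move=> y yr.
have -> : Fmu A B b lam y = A *m (y - x0) + lam y *: (B *m (y - x0))
     + (lam y - lam x0) *: w.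
  have -> : Fmu A B b lam y = Fmu A B b lam y - Fmu A B b lam x0 by rewrite F0 subr0.
  rewrite !FmuE /w.
  rewrite !mulmxBr scalerBl !scalerDr ?scalerBr.
  set a := A *m y; set c := A *m x0; set d := B *m y; set e := B *m x0.
  set u := lam y; set v := lam x0.
  rewrite !opprD !addrA scalerN subrK; congr (_ - _ - _).
  by rewrite -[a + u *: d + u *: b]addrA [LHS]addrAC [LHS]addrA.
have dl := HK' y yr.
have ly : `|lam y| <= `|lam x0| + `|K| * rho.
  rewrite -[lam y](subrK (lam x0)) (le_trans (ler_normD _ _)) // addrC lerD2l.
  apply: (le_trans dl); apply: ler_wpM2l => //; exact: ltW.
rewrite [X in _ <= X]mulrDl [X in _ <= X + _]mulrDl.
rewrite (le_trans (ler_normD _ _)) // lerD //.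
  rewrite (le_trans (ler_normD _ _)) // lerD //; first exact: mulmx_norm.
  rewrite normrZ -mulrA.
  by apply: ler_pM => //; exact: mulmx_norm.
by rewrite normrZ mulrAC; apply: ler_wpM2r => //.
Qed.
End E.
Section G.
Variables (R : realType) (n : nat).
Local Notation V := 'cV[R]_n.

Definition hh (x0 y : V) : R := \sum_i (y i 0 - x0 i 0) ^+ 2.

Lemma hh_ge0 x0 y : 0 <= hh x0 y.
Proof. by apply: sumr_ge0 => i _; exact: sqr_ge0. Qed.

Lemma norm_sq_le_hh x0 y : `|y - x0| ^+ 2 <= hh x0 y.
Proof.
have [->|nz] := eqVneq `|y - x0| 0.
  by rewrite expr0n /= hh_ge0.
have [[i j] /= E] := mx_norm_neq0 nz.
rewrite [`|y - x0|]E ord1 !mxE real_normK ?num_real //.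
rewrite /hh (bigD1 i) //= lerDl.
by apply: sumr_ge0 => k _; exact: sqr_ge0.
Qed.

Lemma hh_eq0 x0 y : hh x0 y = 0 -> y = x0.
Proof.
move=> H; apply/matrixP => i j; rewrite ord1.
have := psumr_eq0P (fun k _ => sqr_ge0 (y k 0 - x0 k 0)) H (i:=i) isT.
by move/eqP; rewrite sqrf_eq0 subr_eq0 => /eqP.
Qed.

Lemma inner_bound (A B : 'M[R]_n) (b : V) lam x0 : Ck 1 lam ->
  Fmu A B b lam x0 = 0 ->
  exists2 r, 0 < r & exists L, forall y, hh x0 y < r ->
    \sum_i (y i 0 - x0 i 0) * Fmu A B b lam y i 0 <= L * hh x0 y.
Proof.
move=> C1 F0; have [rho rho0 [L L0 HL]] := F_lip C1 F0.
exists (rho ^+ 2); first exact: exprn_gt0.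
exists (n%:R * L) => y hy.
have hd := norm_sq_le_hh x0 y.
have yr : `|y - x0| < rho.
  have := normr_ge0 (y - x0); nra.
have HF := HL y yr.
apply: (@le_trans _ _ (n%:R * L * `|y - x0| ^+ 2)); last first.
  by apply: ler_wpM2l => //; rewrite mulr_ge0.
have -> : n%:R * L * `|y - x0| ^+ 2 = \sum_(i < n) (`|y - x0| * (L * `|y - x0|)).
  by rewrite sumr_const card_ord -mulr_natl; rewrite expr2; ring.
apply: ler_sum => i _.
apply: (le_trans (ler_norm _)); rewrite normrM; apply: ler_pM => //.
  by have := entry_le (y - x0) i 0; rewrite !mxE.
exact: (le_trans (entry_le _ i 0)).
Qed.
End G.
Section H.
Variable R : realType.

Lemma zero_stays (h dh : R -> R) (r L : R) : 0 < r -> h 0 = 0 ->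
  (forall t : R, 0 <= h t) -> h x @[x --> 0^'+] --> 0 ->
  (forall t : R, 0 < t -> is_derive t 1 h (dh t)) ->
  (forall t : R, 0 < t -> h t < r -> dh t <= 2 * L * h t) ->
  forall t : R, 0 <= t -> h t = 0.
Proof.
move=> r0 h0 hge hr hd hb t1 t10.
apply/eqP; rewrite eq_le hge andbT leNgt; apply/negP => ht1.
have t1p : 0 < t1.
  rewrite lt_neqAle t10 andbT; apply/eqP => E; move: ht1; by rewrite -E h0 ltxx.
pose Z := [set s : R | (0 <= s <= t1) /\ h s = 0].
have Z0 : Z 0 by split; [rewrite lexx ltW | ].
have Zs : has_sup Z.
  by split; [exists 0 | exists t1 => u [/andP[_ ?] _]].
pose s := sup Z.
have s0 : 0 <= s := sup_upper_bound Zs Z0.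
have st1 : s <= t1 by apply: ge_sup; [exists 0 | move=> u [/andP[_ ?] _]].
have hcont u : 0 < u -> {for u, continuous h}.
  by move=> u0; have [H _] := hd u u0; exact: der_cont_at.
have hs : h s = 0.
  have [->//|sn0] := eqVneq s 0.
  have sp : 0 < s by rewrite lt_neqAle eq_sym sn0 s0.
  apply/eqP; rewrite eq_le hge andbT leNgt; apply/negP => hsp.
  have Hn : \forall t \near s, `|h s - h t| < h s.
    by apply: ((cvgrPdist_lt _ _).1 (hcont s sp)).
  have [e e0 He] := near_ball Hn.
  have [u Zu ue] := sup_adherent e0 Zs.
  have us : u <= s := sup_upper_bound Zs Zu.
  have H1 : `|u - s| < e.
    rewrite ler0_norm ?subr_le0 // opprB.
    by rewrite ltrBlDr addrC -ltrBlDr.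
  by have := He u H1; case: Zu => _ ->; rewrite subr0 ltNge ler_norm.
have slt : s < t1.
  rewrite lt_neqAle st1 andbT; apply/eqP => E.
  by move: ht1; rewrite -E hs ltxx.
have pos u : s < u -> u <= t1 -> 0 < h u.
  move=> su ut1; rewrite lt_neqAle hge andbT; apply/eqP => hu0.
  have : u <= s.
    apply: sup_upper_bound Zs _ _; split => //.
    by rewrite ut1 andbT (le_trans s0 (ltW su)).
  by rewrite leNgt su.
have hrs : h u @[u --> s^'+] --> 0.
  have [E|sn0] := eqVneq s 0; first by rewrite E.
  have sp : 0 < s by rewrite lt_neqAle eq_sym sn0 s0.
  by rewrite -hs; apply: cvg_at_right_filter; exact: hcont.
have : \forall u \near s^'+, h u < r.
  have Hn : \forall t \near s^'+, `|0 - h t| < r.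
    by apply: ((cvgrPdist_lt _ _).1 hrs).
  near=> u.
  have : `|0 - h u| < r by near: u; exact: Hn.
  by rewrite sub0r normrN ger0_norm.
move=> Hnr.
have [rho rho0 Hrho] := @near_ball R R s (fun u => s < u -> h u < r) Hnr.
pose t2 := Num.min t1 (s + rho / 2).
have st2 : s < t2 by rewrite lt_min slt ltrDl divr_gt0.
have t2t1 : t2 <= t1 by rewrite ge_min lexx.
have hlt u : s < u -> u <= t2 -> h u < r.
  move=> su ut2; apply: Hrho => //.
  rewrite gtr0_norm ?subr_gt0 // ltrBlDl.
  apply: (le_lt_trans ut2); rewrite /t2 gt_min; apply/orP; right.
  by rewrite ltrD2l ltr_pdivrMr // ltr_pMr // ltr1n.
pose c := - (2 * L).
pose E := fun u : R => expR (c * u).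
have Ed (u : R) : is_derive u 1 E (expR (c * u) * c).
  have hl : is_derive u 1 (fun v : R => c * v) c.
    have H : is_derive u 1 (cst c * id) (c%:A + u *: 0) := is_deriveM _ _.
    have e1 : (cst c * id) = (fun v : R => c * v) by apply: funext => v.
    rewrite e1 scaler0 addr0 in H.
    have e2 : c%:A = c by rewrite /GRing.scale /= mulr1.
    rewrite e2 in H; exact: H.
  exact: (is_derive1_comp (is_derive_expR (c * u)) hl).
pose g := fun u => E u * h u.
have gd (u : R) : 0 < u -> is_derive u 1 g (E u * dh u + h u * (E u * c)).
  move=> u0; have := is_deriveM (Ed u) (hd u u0).
  by [].
have Ec (u : R) : {for u, continuous E} by have [H _] := Ed u; exact: der_cont_at.
have gc : {within `[s, t2], continuous g}.
  apply/(continuous_within_itvP _ st2); split.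
  - move=> u; rewrite in_itv /= => /andP[su _].
    have [H _] := gd u (le_lt_trans s0 su); exact: der_cont_at.
  - rewrite /g hs; apply: cvgM; last exact: hrs.
    exact: (cvg_at_right_filter (Ec s)).
  - have [H _] := gd t2 (le_lt_trans s0 st2).
    exact: cvg_at_left_filter (der_cont_at H).
have gdi (u : R) : u \in `]s, t2[ ->
    is_derive u 1 g (E u * dh u + h u * (E u * c)).
  by rewrite in_itv /= => /andP[su _]; exact: gd (le_lt_trans s0 su).
have [c0 c0in Hm] := @MVT R g _ s t2 st2 gdi gc.
move: c0in; rewrite in_itv /= => /andP[sc0 c0t2].
have c0p : 0 < c0 := le_lt_trans s0 sc0.
have hb0 := hb c0 c0p (hlt c0 sc0 (ltW c0t2)).
have Ec0 : 0 < E c0 by rewrite /E expR_gt0.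
have Et2 : 0 < E t2 by rewrite /E expR_gt0.
have ht2 := pos t2 st2 t2t1.
have gs : g s = 0 by rewrite /g hs mulr0.
have gt2 : 0 < g t2 by rewrite /g mulr_gt0.
move: Hm; rewrite gs subr0 => Hm.
have dt : 0 < t2 - s by rewrite subr_gt0.
have hc0 := hge c0.
have dg0 : E c0 * dh c0 + h c0 * (E c0 * c) <= 0.
  have -> : E c0 * dh c0 + h c0 * (E c0 * c) = E c0 * (dh c0 - 2 * L * h c0).
    by rewrite /c; ring.
  by rewrite pmulr_rle0 // subr_le0.
by move: gt2; rewrite Hm pmulr_lgt0 // ltNge dg0.
Unshelve. all: by end_near.
Qed.
End H.
Section I.
Variable R : realType.

Lemma der_sq (f : R -> R) (a t df : R) : is_derive t 1 f df ->
  is_derive t 1 (fun s => (f s - a) ^+ 2) (2 * (f t - a) * df).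
Proof.
move=> Hf.
have H1 : is_derive t 1 (f - cst a) (df - 0) by apply: is_deriveB.
have H2 : is_derive t 1 ((f - cst a) * (f - cst a))
   ((f - cst a) t *: (df - 0) + (f - cst a) t *: (df - 0)) by apply: is_deriveM.
have e : (f - cst a) * (f - cst a) = (fun s => (f s - a) ^+ 2).
  by apply: funext => s; rewrite /= expr2.
have ev : (f - cst a) t *: (df - 0) + (f - cst a) t *: (df - 0) = 2 * (f t - a) * df.
  rewrite /GRing.scale /= subr0.
  have -> : (f - cst a) t = f t - a by [].
  ring.
rewrite e ev in H2; exact: H2.
Qed.

Lemma der_sum k (f : 'I_k -> R -> R) (df : 'I_k -> R) (t : R) :
  (forall i, is_derive t 1 (f i) (df i)) ->
  is_derive t 1 (fun s => \sum_(i < k) f i s) (\sum_(i < k) df i).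
Proof.
move=> Hf.
have H : is_derive t 1 (\sum_(i < k) f i) (\sum_(i < k) df i) := is_derive_sum Hf.
rewrite fct_sumE in H; exact: H.
Qed.
End I.
Section J.
Variables (R : realType) (n : nat).
Local Notation V := 'cV[R]_n.

Lemma hh_cont (x0 y : V) : {for y, continuous (hh x0)}.
Proof.
have -> : hh x0 = (fun z => \sum_(i < n) (z i 0 - x0 i 0) ^+ 2) by [].
apply: cont_sum => i.
have c1 : {for y, continuous (fun z : V => z i 0 - x0 i 0)}.
  apply: continuousB; first exact: (@coord_continuous R _ _ i 0 y).
  exact: cst_continuous.
have -> : (fun z : V => (z i 0 - x0 i 0) ^+ 2) =
          (fun z : V => (z i 0 - x0 i 0) * (z i 0 - x0 i 0)).
  by apply: funext => z; rewrite expr2.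

exact: continuousM.
Qed.

Lemma equil_attr (A B : 'M[R]_n) (b : V) lam x0 : Ck 1 lam ->
  Fmu A B b lam x0 = 0 -> domain_of_attraction (Fmu A B b lam) x0 -> x0 = 0.
Proof.
move=> C1 F0 [phi [[p0 [pr pd]] plim]].
have [r r0 [L HL]] := inner_bound C1 F0.
set F := Fmu A B b lam in HL pd.
pose h t := hh x0 (phi t).
pose dh t := \sum_(i < n) (2 * (phi t i 0 - x0 i 0) * F (phi t) i 0).
have Hc (t : R) : 0 < t -> forall i, is_derive t 1 (fun s => phi s i 0) (F (phi t) i 0).
  move=> t0 i; have [dv dval] := pd t t0.
  apply: DeriveDef; first by move/derivable_mxP: dv; apply.
  by rewrite -dval derive_mx // mxE.
have key : forall t : R, 0 <= t -> h t = 0.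
  apply: (@zero_stays R h dh r L r0).
  - by rewrite /h p0 /hh big1 // => i _; rewrite subrr expr0n.
  - by move=> t; exact: hh_ge0.
  - have := @continuous_cvg _ _ _ (0^'+) _ phi (hh x0) x0 (@hh_cont x0 x0) pr.
    have -> : hh x0 x0 = 0 by rewrite /hh big1 // => i _; rewrite subrr expr0n.
    move=> H; exact: H.
  - move=> t t0; apply: der_sum => i.
    exact: der_sq (Hc t t0 i).
  - move=> t t0 ht.
    rewrite /dh.
    have -> : \sum_(i < n) 2 * (phi t i 0 - x0 i 0) * F (phi t) i 0 =
       2 * \sum_(i < n) (phi t i 0 - x0 i 0) * F (phi t) i 0.
      by rewrite mulr_sumr; apply: eq_bigr => i _; rewrite mulrA.
    rewrite -mulrA ler_pM2l //; exact: HL.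
have pe : forall t : R, 0 <= t -> phi t = x0 by move=> t t0; apply: hh_eq0; exact: key.
have : phi t @[t --> +oo] --> x0.
  have E : \forall t \near +oo, (fun=> x0) t = phi t.
    near=> t; rewrite pe //; near: t; exact: nbhs_pinfty_ge.
  exact: cvg_trans (near_eq_cvg E) (cvg_cst x0).
move=> px0; exact: (cvg_unique _ px0 plim).
Unshelve. all: by end_near.
Qed.
End J.
Section K.
Variables (R : realType) (n : nat).
Local Notation V := 'cV[R]_n.

Lemma enorm_hh (x : V) : enorm x = Num.sqrt (hh 0 x).
Proof. by rewrite /enorm /hh; congr Num.sqrt; apply: eq_bigr => i _; rewrite mxE subr0. Qed.

Lemma enorm0 : enorm (0 : V) = 0.
Proof. by rewrite /enorm big1 ?sqrtr0 // => i _; rewrite mxE expr0n. Qed.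

Lemma enorm_cont : continuous (@enorm R n).
Proof.
move=> x; have -> : @enorm R n = Num.sqrt \o hh 0.
  by apply: funext => y; rewrite enorm_hh.
apply: continuous_comp; first exact: hh_cont.
exact: sqrt_continuous.
Qed.

Lemma Fmu_cont (A B : 'M[R]_n) (b : V) lam : continuous lam ->
  continuous (Fmu A B b lam).
Proof.
move=> lc x.
have -> : Fmu A B b lam = (fun y => A *m y + lam y *: (B *m y + b)).
  by apply: funext => y; rewrite FmuE.
apply: continuousD.
  by apply: mulmx_cont; [exact: cst_continuous | exact: cvg_id].
apply: continuousZ; first exact: lc.
apply: continuousD; last exact: cst_continuous.
by apply: mulmx_cont; [exact: cst_continuous | exact: cvg_id].
Qed.

Lemma FmuD (A B : 'M[R]_n) (b : V) lam del x :
  Fmu A B b (fun y => lam y + del y) x = Fmu A B b lam x + del x *: (B *m x + b).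
Proof. by rewrite !FmuE scalerDl addrA. Qed.
End K.
Unset Implicit Arguments.

Theorem lemma4 (R : realType) (n : nat) (hn : (0 < n)%N)
  (A B : 'M[R]_n) (b : 'cV[R]_n) (lambda : 'cV[R]_n -> R)
  (K1 : set 'cV[R]_n) :
  smooth lambda -> lambda 0 = 0 ->
  asympt_stable_0 (Fmu A B b lambda) ->
  semialgebraic K1 -> compact K1 ->
  K1 `<=` domain_of_attraction (Fmu A B b lambda) ->
  forall Rad : R, 0 < Rad ->
  exists2 eta : R, 0 < eta &
    forall delta : 'cV[R]_n -> R, VR Rad delta ->
      sup [set `|delta x| | x in K1] < eta ->
      Fmu A B b (fun x => lambda x + delta x) 0 = 0 /\
      (forall x, K1 x -> Fmu A B b (fun y => lambda y + delta y) x = 0 -> x = 0).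
Proof.
move=> sm l0 _ _ cK1 K1D Rad Rad0.
have C1 : Ck 1 lambda := sm 1%N.
have lc : continuous lambda := sm 0%N.
have key x : K1 x -> Fmu A B b lambda x = 0 -> x = 0.
  by move=> Kx F0; exact: (equil_attr C1 F0 (K1D x Kx)).
pose G x := `|Fmu A B b lambda x|.
pose W x := `|B *m x + b|.
have Gc : continuous G.
  move=> x; apply: (continuous_comp (@Fmu_cont R n A B b lambda lc x)).
  exact: norm_continuous.
have Wc : continuous W.
  move=> x; apply: continuous_comp; last exact: norm_continuous.
  apply: continuousD; last exact: cst_continuous.
  by apply: mulmx_cont; [exact: cst_continuous | exact: cvg_id].
pose S := K1 `&` [set x | Rad <= enorm x].
have cS : compact S.
  apply: compact_closedI => //.
  apply: (@preimage_closed _ _ (@enorm R n) [set y | Rad <= y]).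
    by move=> y _; exact: enorm_cont.
  exact: closed_ge.
have [c0 c00 Hc0] : exists2 c0, 0 < c0 & forall x, S x -> c0 <= G x.
  case: (pselect (S !=set0)) => [S0|S0]; last first.
    exists 1 => // x Sx; exfalso; apply: S0; by exists x.
  have [xm xmS Hxm] := compact_EVT_min S0 cS (continuous_subspaceT Gc).
  exists (G xm); last by move=> x Sx; apply: Hxm; rewrite inE.
  move: xmS; rewrite inE => -[Kxm Exm].
  rewrite /G normr_gt0; apply/negP => /eqP F0.
  have xm0 := key xm Kxm F0.
  by move: Exm; rewrite xm0 /= enorm0 leNgt Rad0.
have [M M0 HM] : exists2 M, 0 < M & forall x, K1 x -> W x <= M.
  case: (pselect (K1 !=set0)) => [K0|K0]; last first.
    exists 1 => // x Kx; exfalso; apply: K0; by exists x.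
  have [xm xmK Hxm] := compact_EVT_max K0 cK1 (continuous_subspaceT Wc).
  exists (W xm + 1).
    by rewrite /W; have := normr_ge0 (B *m xm + b); lra.
  move=> x Kx; have := Hxm x; rewrite inE => /(_ Kx); lra.
exists (c0 / M); first by rewrite divr_gt0.
move=> delta [sd dR] hsup.
have d0 : delta 0 = 0.
  by apply: dR; rewrite enorm0.
split.
  by rewrite FmuE l0 d0 addr0 mulmx0 scale0r addr0.
move=> x Kx Fx.
have [dx0|dxn0] := eqVneq (delta x) 0.
  by apply: key => //; move: Fx; rewrite FmuD dx0 scale0r addr0.
exfalso.
have Ex : Rad <= enorm x.
  by rewrite leNgt; apply/negP => /dR; apply/eqP.
have Sx : S x by split.
have dc : continuous delta := sd 0%N.
have dsup : `|delta x| <= sup [set `|delta y| | y in K1].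
  apply: sup_upper_bound; last by exists x.
  split; first by exists `|delta x|, x.
  have K0 : K1 !=set0 by exists x.
  have [xm _ Hxm] := compact_EVT_max K0 cK1
    (continuous_subspaceT (fun y => continuous_comp (dc y) (@norm_continuous _ _ _))).
  exists `|delta xm| => _ [y Ky <-]; apply: Hxm; by rewrite inE.
have GW : G x = `|delta x| * W x.
  rewrite /G; move: Fx; rewrite FmuD => /eqP; rewrite addr_eq0 => /eqP ->.
  by rewrite normrN normrZ.
have := Hc0 x Sx; rewrite GW.
have : `|delta x| * W x <= `|delta x| * M by apply: ler_wpM2l => //; exact: HM.
have : `|delta x| * M < c0.
  by rewrite -ltr_pdivlMr //; exact: (le_lt_trans dsup hsup).
move=> h1 h2 h3.
by have := lt_le_trans (le_lt_trans h2 h1) h3; rewrite ltxx.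
Qed.
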